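(* Let $G$, $H$, $K$ be impartial games with $H = K$. Then $G\circ H = G\circ K$.
   Context: All games are finite (short) impartial games under normal play. A game is identified with its set of options; $\mathbf{E}$ denotes the game with no options, and $\equiv$ denotes identity of games (same set of options, recursively). The disjunctive sum is $G+H \equiv \{g+H,\ G+h\}$. A $\mathcal{P}$-position is a game all of whose options are $\mathcal{N}$-positions; an $\mathcal{N}$-position has some option that is a $\mathcal{P}$-position. Two games are equal, $G=H$, if $G+X$ and $H+X$ have the same outcome for every game $X$; for impartial games this holds iff $G+H$ is a $\mathcal{P}$-position. (Equality is weaker than identity $\equiv$.) The split sum is defined recursively by: $G\circ H \equiv \mathbf{E}$ if $G\equiv \mathbf{E}$; $G\circ H\equiv G$ if $H\equiv\mathbf{E}$ (and $G\not\equiv\mathbf{E}$); otherwise $G\circ H \equiv \{G\circ h,\ g\circ H\}$ where $g$ ranges over the options of $G$ and $h$ over the options of $H$. *)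

(* Defs.v *)
(* Finite impartial games, represented by their (finite) list
   of options; identity of games (≡) is recursive set-equality of options,
   and every notion below is invariant under it. *)
From Stdlib Require Import List Bool.
Import ListNotations.

Inductive game : Type := Game : list game -> game.

Definition options (G : game) : list game := let (l) := G in l.

Definition E : game := Game [].

Fixpoint dsum (G H : game) {struct G} : game :=
  match G with
  | Game gs =>
      let fix aux (H : game) : game :=
        match H with
        | Game hs => Game (map (fun g => dsum g H) gs ++ map aux hs)
        end in
      aux H
  end.

(* Split sum:  G∘H = E if G ≡ E;  G if H ≡ E (G not ≡ E);
   otherwise { G∘h, g∘H }.  (A game is ≡ E iff it has no options.) *)
Fixpoint split_sum (G H : game) {struct G} : game :=
  match G with
  | Game gs =>
      let fix aux (H : game) : game :=
        match H with
        | Game hs =>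
            match gs, hs with
            | [], _ => E
            | _, [] => G
            | _, _ => Game (map aux hs ++ map (fun g => split_sum g H) gs)
            end
        end in
      aux H
  end.

Fixpoint isP (G : game) : bool :=
  match G with
  | Game gs => forallb (fun g => negb (isP g)) gs
  end.

Definition game_eq (G H : game) : Prop :=
  forall X : game, isP (dsum G X) = isP (dsum H X).

(* Main.v *)
Require Import Defs.
From Stdlib Require Import List Bool Arith Lia.
Import ListNotations.

Fixpoint mexf (l : list nat) (n k : nat) : nat :=
  match k with
  | 0 => n
  | S k => if in_dec Nat.eq_dec n l then mexf l (S n) k else n
  end.

Definition mex (l : list nat) : nat := mexf l 0 (S (length l)).

Lemma mexf_below l : forall k n, (forall w, w < n -> In w l) ->
  forall w, w < mexf l n k -> In w l.
Proof.
  induction k as [|k IH]; intros n Hn w Hw; simpl in Hw; auto.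
  destruct (in_dec Nat.eq_dec n l) as [Hi|Hi]; auto.
  apply (IH (S n)); auto.
  intros w' Hw'. destruct (Nat.eq_dec w' n); [subst; auto | apply Hn; lia].
Qed.

Lemma below_len l n : (forall w, w < n -> In w l) -> n <= length l.
Proof.
  intros H. rewrite <- (length_seq n 0).
  apply NoDup_incl_length; [apply seq_NoDup|].
  intros w Hw. apply in_seq in Hw. apply H. lia.
Qed.

Lemma mexf_notin l : forall k n, (forall w, w < n -> In w l) -> length l < n + k ->
  ~ In (mexf l n k) l.
Proof.
  induction k as [|k IH]; intros n Hn Hl; simpl.
  - apply below_len in Hn. lia.
  - destruct (in_dec Nat.eq_dec n l) as [Hi|Hi]; auto.
    apply IH; [|lia].
    intros w' Hw'. destruct (Nat.eq_dec w' n); [subst; auto | apply Hn; lia].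
Qed.

Lemma mex_notin l : ~ In (mex l) l.
Proof. apply mexf_notin; [intros; lia | lia]. Qed.

Lemma mex_below l w : w < mex l -> In w l.
Proof. apply mexf_below. intros; lia. Qed.

Fixpoint grundy (G : game) : nat :=
  match G with Game gs => mex (map grundy gs) end.

Fixpoint gsize (G : game) : nat :=
  match G with Game gs => S (list_sum (map gsize gs)) end.

Lemma size_opt A x : In x (options A) -> gsize x < gsize A.
Proof.
  destruct A as [gs]; simpl. induction gs as [|g gs IH]; simpl; [tauto|].
  intros [->|H]; [lia|]. specialize (IH H). lia.
Qed.

Lemma grundy_opt A x : In x (options A) -> grundy x <> grundy A.
Proof.
  destruct A as [gs]; simpl. intros Hx Heq. apply (mex_notin (map grundy gs)).
  rewrite <- Heq. apply in_map. auto.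
Qed.

Lemma grundy_mex A w : w < grundy A -> exists x, In x (options A) /\ grundy x = w.
Proof.
  destruct A as [gs]; simpl. intros Hw. apply mex_below in Hw.
  apply in_map_iff in Hw. destruct Hw as [x [H1 H2]]. eauto.
Qed.

Lemma isP_true A : isP A = true <-> forall x, In x (options A) -> isP x = false.
Proof.
  destruct A as [gs]; simpl. rewrite forallb_forall.
  split; intros H x Hx; specialize (H x Hx); destruct (isP x); simpl in *; congruence.
Qed.


Lemma isP_false A : isP A = false -> exists x, In x (options A) /\ isP x = true.
Proof.
  destruct A as [gs]; simpl. induction gs as [|g gs IH]; simpl; [discriminate|].
  destruct (isP g) eqn:E1; simpl.
  - intros _. exists g. auto.
  - intros H. destruct (IH H) as [x [H1 H2]]. eauto.
Qed.

Lemma isP_false_of A x : In x (options A) -> isP x = true -> isP A = false.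
Proof.
  intros Hx Hp. destruct (isP A) eqn:E1; auto.
  rewrite isP_true in E1. rewrite (E1 x Hx) in Hp. discriminate.
Qed.

Lemma dsum_opts A B x : In x (options (dsum A B)) <->
  (exists a, In a (options A) /\ x = dsum a B) \/
  (exists b, In b (options B) /\ x = dsum A b).
Proof.
  destruct A as [gs], B as [hs].
  change (dsum (Game gs) (Game hs)) with
    (Game (map (fun g => dsum g (Game hs)) gs ++ map (dsum (Game gs)) hs)).
  simpl. rewrite in_app_iff, !in_map_iff.
  split; intros [[y [H1 H2]]|[y [H1 H2]]]; eauto.
Qed.

Lemma split_E g : split_sum g E = g.
Proof. destruct g as [[|a l]]; reflexivity. Qed.

Lemma split_nil H : split_sum (Game []) H = E.
Proof. destruct H; reflexivity. Qed.

Lemma split_opts G H x : options G <> [] ->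
  (In x (options (split_sum G H)) <->
  (exists h, In h (options H) /\ x = split_sum G h) \/
  (exists g, In g (options G) /\ x = split_sum g H)).
Proof.
  destruct G as [gs]. simpl options at 1 4. intros Hne. destruct gs as [|g0 gs']; [congruence|]. destruct H as [[|h0 hs']].
  - change (split_sum (Game (g0 :: gs')) (Game [])) with (Game (g0 :: gs')).
    simpl options. split.
    + intros Hx. right. exists x. split; auto. fold E. now rewrite split_E.
    + intros [[h [[] _]]|[g [Hg ->]]]. fold E. now rewrite split_E.
  - change (split_sum (Game (g0 :: gs')) (Game (h0 :: hs'))) with
      (Game (map (split_sum (Game (g0 :: gs'))) (h0 :: hs') ++
             map (fun g => split_sum g (Game (h0 :: hs'))) (g0 :: gs'))).
    unfold options at 1. rewrite in_app_iff, !in_map_iff.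
    split; intros [[y [H1 H2]]|[y [H1 H2]]]; eauto.
Qed.

Lemma isP_dsum_iff : forall n A B, gsize A + gsize B < n ->
  (isP (dsum A B) = true <-> grundy A = grundy B).
Proof.
  induction n as [|n IH]; intros A B Hs; [lia|].
  rewrite isP_true. split.
  - intros Hall.
    destruct (lt_eq_lt_dec (grundy A) (grundy B)) as [[Hl|He]|Hl]; auto; exfalso.
    + destruct (grundy_mex B _ Hl) as [b [Hb Hg]].
      assert (Ho : In (dsum A b) (options (dsum A B))) by (apply dsum_opts; eauto).
      specialize (Hall _ Ho).
      assert (isP (dsum A b) = true).
      { apply (IH A b). pose proof (size_opt _ _ Hb). lia. auto. }
      congruence.
    + destruct (grundy_mex A _ Hl) as [a [Ha Hg]].
      assert (Ho : In (dsum a B) (options (dsum A B))) by (apply dsum_opts; eauto).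
      specialize (Hall _ Ho).
      assert (isP (dsum a B) = true).
      { apply (IH a B). pose proof (size_opt _ _ Ha). lia. auto. }
      congruence.
  - intros Heq x Hx. apply dsum_opts in Hx.
    destruct Hx as [[a [Ha ->]]|[b [Hb ->]]].
    + destruct (isP (dsum a B)) eqn:E1; auto.
      pose proof (size_opt _ _ Ha).
      apply (IH a B) in E1; [|lia]. exfalso. apply (grundy_opt _ _ Ha). congruence.
    + destruct (isP (dsum A b)) eqn:E1; auto.
      pose proof (size_opt _ _ Hb).
      apply (IH A b) in E1; [|lia]. exfalso. apply (grundy_opt _ _ Hb). congruence.
Qed.

Lemma eqv : forall n A B X, gsize A + gsize B + gsize X < n ->
  grundy A = grundy B -> isP (dsum A X) = false -> isP (dsum B X) = false.
Proof.
  induction n as [|n IH]; intros A B X Hs Hg Hp; [lia|].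
  apply isP_false in Hp. destruct Hp as [o [Ho Hpo]].
  apply dsum_opts in Ho. destruct Ho as [[a [Ha ->]]|[x [Hx ->]]].
  - pose proof (size_opt _ _ Ha).
    destruct (lt_eq_lt_dec (grundy a) (grundy B)) as [[Hl|He]|Hl].
    + destruct (grundy_mex B _ Hl) as [b [Hb Hgb]].
      pose proof (size_opt _ _ Hb).
      assert (isP (dsum b X) = true).
      { destruct (isP (dsum b X)) eqn:E1; auto.
        rewrite (IH b a X) in Hpo; auto; lia. }
      apply (isP_false_of _ (dsum b X)); auto. apply dsum_opts; eauto.
    + exfalso. apply (grundy_opt _ _ Ha). congruence.
    + destruct (grundy_mex a (grundy B) Hl) as [a' [Ha' Hga']].
      pose proof (size_opt _ _ Ha').
      assert (Hf : isP (dsum a' X) = false).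
      { rewrite isP_true in Hpo. apply Hpo. apply dsum_opts; eauto. }
      apply (IH a' B X); auto; lia.
  - pose proof (size_opt _ _ Hx).
    assert (isP (dsum B x) = true).
    { destruct (isP (dsum B x)) eqn:E1; auto.
      rewrite (IH B A x) in Hpo; auto; lia. }
    apply (isP_false_of _ (dsum B x)); auto. apply dsum_opts; eauto.
Qed.

Lemma game_eq_of_grundy A B : grundy A = grundy B -> game_eq A B.
Proof.
  intros Hg X.
  destruct (isP (dsum A X)) eqn:E1, (isP (dsum B X)) eqn:E2; auto.
  - rewrite (eqv (S (gsize B + gsize A + gsize X)) B A X) in E1; auto; lia.
  - rewrite (eqv (S (gsize A + gsize B + gsize X)) A B X) in E2; auto; lia.
Qed.

Lemma grundy_of_game_eq A B : game_eq A B -> grundy A = grundy B.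
Proof.
  intros Heq. specialize (Heq A).
  assert (H1 : isP (dsum A A) = true)
    by (apply (isP_dsum_iff (S (gsize A + gsize A))); auto).
  rewrite H1 in Heq. symmetry in Heq.
  apply (isP_dsum_iff (S (gsize B + gsize A))) in Heq; auto.
Qed.

Lemma split_grundy : forall n G H K, gsize G + gsize H + gsize K < n ->
  grundy H = grundy K -> grundy (split_sum G H) = grundy (split_sum G K).
Proof.
  induction n as [|n IH]; intros G H K Hs Hg; [lia|].
  destruct G as [[|g0 gs']].
  - now rewrite !split_nil.
  - remember (Game (g0 :: gs')) as G eqn:HG.
    assert (Hne : options G <> []) by (subst; discriminate).
    assert (One : forall H K, gsize G + gsize H + gsize K < S n -> grundy H = grundy K ->
              grundy (split_sum G H) < grundy (split_sum G K) -> False).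
    { clear H K Hs Hg. intros H K Hs Hg Hlt.
      destruct (grundy_mex _ _ Hlt) as [o [Ho Hgo]].
      apply (split_opts _ _ _ Hne) in Ho.
      destruct Ho as [[k [Hk ->]]|[g [Hgi ->]]].
      - pose proof (size_opt _ _ Hk).
        destruct (lt_eq_lt_dec (grundy k) (grundy H)) as [[Hl|He]|Hl].
        + destruct (grundy_mex H _ Hl) as [h [Hh Hgh]].
          pose proof (size_opt _ _ Hh).
          assert (E1 : grundy (split_sum G h) = grundy (split_sum G k))
            by (apply IH; auto; lia).
          apply (grundy_opt (split_sum G H) (split_sum G h)).
          * apply split_opts; eauto.
          * congruence.
        + apply (grundy_opt _ _ Hk). congruence.
        + destruct (grundy_mex k _ Hl) as [k' [Hk' Hgk']].
          pose proof (size_opt _ _ Hk').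
          assert (E1 : grundy (split_sum G k') = grundy (split_sum G H))
            by (apply IH; auto; lia).
          apply (grundy_opt (split_sum G k) (split_sum G k')).
          * apply split_opts; eauto.
          * congruence.
      - assert (Hsg : gsize g < gsize G) by (apply size_opt; auto).
        assert (E1 : grundy (split_sum g H) = grundy (split_sum g K))
          by (apply IH; auto; lia).
        apply (grundy_opt (split_sum G H) (split_sum g H)).
        + apply split_opts; eauto.
        + congruence. }
    destruct (lt_eq_lt_dec (grundy (split_sum G H)) (grundy (split_sum G K)))
      as [[Hl|He]|Hl]; auto; exfalso.
    + apply (One H K); auto.
    + apply (One K H); auto; lia.
Qed.

Theorem theorem2p5 (G H K : game) :
  game_eq H K -> game_eq (split_sum G H) (split_sum G K).
Proof.
  intros Heq. apply game_eq_of_grundy.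
  apply (split_grundy (S (gsize G + gsize H + gsize K))); auto.
  apply grundy_of_game_eq; auto.
Qed.
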